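(* Let $T$ be a labeled tree with an even number of vertices whose bipartition $V(T)=A\sqcup B$ into two independent sets satisfies $|A|\ne|B|$. Then $X(T;\mathbf{x},q)$ is not palindromic; in particular it is not symmetric.
   Context: A labeled graph is a finite simple graph with vertex set $[n]$. A proper coloring is $c\colon[n]\to\{1,2,\dots\}$ with adjacent vertices colored differently; $\operatorname{asc}(c)=\#\{ij\in E: i<j,\ c(i)<c(j)\}$. The CQF is $X(G;\mathbf{x},q)=\sum_{c \text{ proper}} x_{c(1)}\cdots x_{c(n)}q^{\operatorname{asc}(c)}$. It is symmetric if each coefficient of $q^k$ is a symmetric function, and palindromic if, with $m=|E|$, the coefficient of $q^k$ equals that of $q^{m-k}$ for all $k$. *)

(* Defs.v *)
From mathcomp Require Import all_boot.
Set Implicit Arguments. Unset Strict Implicit. Unset Printing Implicit Defensive.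

(* A labeled graph on vertex set [n] = 'I_n (vertex i <-> label i+1),
   given by a symmetric irreflexive relation e. *)

Definition connected_graph n (e : rel 'I_n) : Prop := forall x y, connect e x y.

Definition acyclic_graph n (e : rel 'I_n) : Prop :=
  forall s : seq 'I_n, 3 <= size s -> ~ ucycle e s.

Definition is_tree n (e : rel 'I_n) : Prop := connected_graph e /\ acyclic_graph e.

Definition independent n (e : rel 'I_n) (A : {set 'I_n}) : bool :=
  [forall i in A, forall j in A, ~~ e i j].

(* Colorings with colors in {1,..,k}, color j : 'I_k standing for j+1. *)
Definition proper_col n k (e : rel 'I_n) (c : {ffun 'I_n -> 'I_k}) : bool :=
  [forall i, forall j, e i j ==> (c i != c j)].

Definition asc n k (e : rel 'I_n) (c : {ffun 'I_n -> 'I_k}) : nat :=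
  #|[set p : 'I_n * 'I_n | [&& p.1 < p.2, e p.1 p.2 & c p.1 < c p.2]]|.

Definition nedges n (e : rel 'I_n) : nat :=
  #|[set p : 'I_n * 'I_n | (p.1 < p.2) && e p.1 p.2]|.

(* Coefficient of q^k x_1^(alpha_0) x_2^(alpha_1) ... x_r^(alpha_(r-1)) in
   X(G; x, q), where alpha = [:: alpha_0; ...; alpha_(r-1)]: the number of
   proper colorings with exactly alpha_j vertices of color j+1 (hence no
   color > r) and with k ascents. *)
Definition cqf_coef n (e : rel 'I_n) (k : nat) (alpha : seq nat) : nat :=
  #|[set c : {ffun 'I_n -> 'I_(size alpha)} |
      [&& proper_col e c,
          [forall j : 'I_(size alpha), #|[set i | c i == j]| == nth 0 alpha j]
        & asc e c == k]]|.

Definition cqf_symmetric n (e : rel 'I_n) : Prop :=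
  forall (k : nat) (alpha beta : seq nat),
    perm_eq alpha beta -> cqf_coef e k alpha = cqf_coef e k beta.

Definition cqf_palindromic n (e : rel 'I_n) : Prop :=
  forall (k : nat) (alpha : seq nat), k <= nedges e ->
    cqf_coef e k alpha = cqf_coef e (nedges e - k) alpha.

(* Main.v *)
Require Import Defs.
From mathcomp Require Import all_boot zify.
Set Implicit Arguments. Unset Strict Implicit. Unset Printing Implicit Defensive.

Definition eS (T : finType) (e : rel T) (S : {set T}) : rel T :=
  fun x y => [&& x \in S, y \in S & e x y].

Definition ES (T : finType) (e : rel T) (S : {set T}) : {set T * T} :=
  [set p | eS e S p.1 p.2].

Lemma eS_sym (T : finType) (e : rel T) S : symmetric e -> symmetric (eS e S).
Proof. by move=> he x y; rewrite /eS he andbCA. Qed.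

Lemma eS_e (T : finType) (e : rel T) S x y : eS e S x y -> e x y.
Proof. by case/and3P. Qed.

Lemma noext (T : finType) (e : rel T) (S : {set T}) v p :
  symmetric e -> irreflexive e ->
  (forall s : seq T, 3 <= size s -> ~ ucycle e s) ->
  (forall x y, x \in S -> y \in S -> connect (eS e S) x y) ->
  1 < #|S| -> v \in S -> uniq (v :: p) -> path (eS e S) v p ->
  (forall w, eS e S v w -> w \in v :: p) ->
  exists v u, [/\ v \in S, eS e S v u & forall w, eS e S v w -> w = u].
Proof.
move=> hsym hirr hacy hconn hS Hv Hu Hp Hno.
case: p Hu Hp Hno => [|u p] Hu Hp Hno.
  have [y Hy Hyv] : exists2 y, y \in S & y != v.
    have : 0 < #|S :\ v| by move: hS; rewrite (cardsD1 v) Hv; lia.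
    by rewrite card_gt0 => /set0Pn [y]; rewrite in_setD1 => /andP[? ?]; exists y.
  move/connectP: (hconn v y Hv Hy) => [[|z q] Hq Hl].
    by rewrite /= Hl eqxx in Hyv.
  move: Hq => /= /andP[Hvz _].
  have := Hno z Hvz; rewrite inE => /eqP Hzv.
  by move: Hvz; rewrite Hzv /eS; case/and3P => _ _ H; move: (hirr v); rewrite H.
exists v, u; split => //; first by case/andP: Hp.
move=> w Hvw; have := Hno w Hvw; rewrite inE.
case: eqP => [Ew|_ /=]; first by move: Hvw; rewrite Ew /eS; case/and3P => _ _ H; move: (hirr v); rewrite H.
rewrite inE; case: eqP => // _ Hwp; exfalso.
case/splitPr: Hwp Hu Hp => p1 p2 Hu Hp.
apply: (hacy (v :: u :: rcons p1 w)).
  by rewrite /= size_rcons.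
have Hpe : path e v (u :: p1 ++ w :: p2) by apply: sub_path Hp => ? ?; apply: eS_e.
apply/andP; split.
  rewrite /cycle rcons_cons /= rcons_path last_rcons.
  move: Hpe => /= /andP[-> ]; rewrite cat_path /= => /and3P[H1 H2 _].
  by rewrite rcons_path H1 H2 hsym (eS_e Hvw).
apply: subseq_uniq Hu.
by rewrite -cats1 -[in X in subseq _ X]cat_cons -[in X in subseq _ X]cat_cons -(cat1s w p2) catA; apply: prefix_subseq.
Qed.

Lemma leaf_exists (T : finType) (e : rel T) (S : {set T}) :
  symmetric e -> irreflexive e ->
  (forall s : seq T, 3 <= size s -> ~ ucycle e s) ->
  (forall x y, x \in S -> y \in S -> connect (eS e S) x y) ->
  1 < #|S| ->
  exists v u, [/\ v \in S, eS e S v u & forall w, eS e S v w -> w = u].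
Proof.
move=> hsym hirr hacy hconn hS.
have main : forall m (v : T) (p : seq T), #|T| - size (v :: p) <= m ->
    v \in S -> uniq (v :: p) -> path (eS e S) v p ->
    exists v u, [/\ v \in S, eS e S v u & forall w, eS e S v w -> w = u].
  elim=> [|m IH] v p Hm Hv Hu Hp;
    case: (pickP [pred w | eS e S v w && (w \notin v :: p)]) =>
      [w /andP[Hvw Hwn] | Hno].
  - have Hu2 : uniq (w :: v :: p) by rewrite cons_uniq Hwn Hu.
    have := max_card (mem (w :: v :: p)).
    rewrite (card_uniqP Hu2) /=. move: Hm => /=. lia.
  - apply: (@noext T e S v p) => // w Hw; move: (Hno w) => /=; rewrite Hw /=.
    by move/negbFE.
  - apply: (IH w (v :: p)).
    + have Hu2 : uniq (w :: v :: p) by rewrite cons_uniq Hwn Hu.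
      have := max_card (mem (w :: v :: p)).
      rewrite (card_uniqP Hu2) /=. move: Hm => /=. lia.
    + by move: Hvw => /and3P[].
    + by rewrite cons_uniq Hwn Hu.
    + by rewrite /= (eS_sym S hsym) Hvw.
  - apply: (@noext T e S v p) => // w Hw; move: (Hno w) => /=; rewrite Hw /=.
    by move/negbFE.
have [v Hv] : exists v, v \in S.
  by apply/set0Pn; rewrite -card_gt0; lia.
by apply: (main #|T| v [::]) => //; lia.
Qed.

Lemma path_restrict (T : finType) (e : rel T) S v x p :
  path (eS e S) x p -> (forall z, z \in x :: p -> z != v) ->
  path (eS e (S :\ v)) x p.
Proof.
elim: p x => [|y p IH] x; first by [].
rewrite /= => /andP[Hxy Hp] Hz; apply/andP; split; last first.
  by apply: IH => // z Hz1; apply: Hz; rewrite inE Hz1 orbT.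
move: Hxy; rewrite /eS !in_setD1 (Hz x (mem_head _ _)).
by rewrite (Hz y) // !inE eqxx orbT.
Qed.

Lemma conn_remove (T : finType) (e : rel T) S v u : symmetric e ->
  (forall w, eS e S v w -> w = u) ->
  (forall x y, x \in S -> y \in S -> connect (eS e S) x y) ->
  forall x y, x \in S :\ v -> y \in S :\ v -> connect (eS e (S :\ v)) x y.
Proof.
move=> hsym Hleaf hconn x y; rewrite !in_setD1 => /andP[Hxv Hx] /andP[Hyv Hy].
move/connectP: (hconn x y Hx Hy) => [p Hp Hl].
move: Hyv; rewrite Hl; case/shortenP: Hp => p' Hp' Hu' _ Hyv.
apply/connectP; exists p' => //; apply: path_restrict => // z Hz.
apply/eqP => Ezv; move: Hz; rewrite Ezv inE eq_sym (negbTE Hxv) /= => Hvp.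
case/splitPr: Hvp Hp' Hu' Hyv => p1 p2 Hp' Hu' Hyv.
case: p2 Hp' Hu' Hyv => [|b p2] Hp' Hu' Hyv; first by rewrite last_cat eqxx in Hyv.
move: Hp'; rewrite cat_path /= => /and3P[_ Ha /andP[Hb _]].
have Ea := Hleaf _ (etrans (eS_sym S hsym _ _) Ha).
have Eb := Hleaf _ Hb.
move: Hu'; rewrite -cat_cons cat_uniq => /and3P[_ /hasP[]]; exists b.
  by rewrite !inE eqxx orbT.
by rewrite Eb -Ea mem_last.
Qed.

Lemma ES_count (T : finType) (e : rel T) (S : {set T}) :
  symmetric e -> irreflexive e ->
  (forall s : seq T, 3 <= size s -> ~ ucycle e s) ->
  (forall x y, x \in S -> y \in S -> connect (eS e S) x y) ->
  0 < #|S| -> #|ES e S| = 2 * (#|S| - 1).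
Proof.
move=> hsym hirr hacy.
move: {2}#|S| (leqnn #|S|) => N; elim: N S => [|N IH] S HN hconn HS; first lia.
case: (ltngtP #|S| 1) => [|H1|H1]; first lia.
  have [v [u [Hv Hvu Hleaf]]] := leaf_exists hsym hirr hacy hconn H1.
  have Huv : u != v by apply/eqP => E; move: Hvu; rewrite E /eS => /and3P[_ _ H]; move: (hirr v); rewrite H.
  have Hu : u \in S by case/and3P: Hvu.
  have HS' : #|S| = (#|S :\ v|).+1 by rewrite (cardsD1 v) Hv.
  have HS'pos : 0 < #|S :\ v| by apply/card_gt0P; exists u; rewrite in_setD1 Huv Hu.
  have IH' := IH (S :\ v) ltac:(lia) (conn_remove hsym Hleaf hconn) HS'pos.
  have Evu : e v u by case/and3P: Hvu.
  rewrite -(cardsID (ES e (S :\ v)) (ES e S)).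
  have -> : ES e S :&: ES e (S :\ v) = ES e (S :\ v).
    apply/setP => -[a b]; rewrite !inE /eS !in_setD1.
    by case: (a \in S); case: (b \in S); case: (a != v); case: (b != v); case: (e a b).
  have -> : ES e S :\: ES e (S :\ v) = [set (v, u); (u, v)].
    apply/setP => -[a b]; rewrite !inE /eS !in_setD1 /= !xpair_eqE.
    apply/idP/idP.
      case/and4P => H Ha Hb Hab; case: (a =P v) => [Ea|/eqP Nav].
        by rewrite (Hleaf b) ?eqxx //= /eS -Ea Ha Hb Hab.
      move: H; rewrite Ha Hb Hab /= !andbT Nav /= negbK => Ebv; rewrite Ebv andbT.
      by rewrite (Hleaf a) // /eS Hv Ha -(eqP Ebv) hsym Hab.
    case/orP => /andP[/eqP-> /eqP->]; rewrite eqxx /= ?andbF /= Hv Hu //.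
    by rewrite hsym Evu.
  rewrite cards2 xpair_eqE eq_sym (negbTE Huv) /= IH'; lia.
have [x Ex] : exists x, S = [set x] by apply/cards1P/eqP.
rewrite H1 /=; apply/eqP; rewrite cards_eq0; apply/eqP/setP => -[a b].
rewrite !inE /eS Ex !inE /=.
by case: eqP => // ->; case: eqP => // ->; rewrite hirr.
Qed.

Lemma nedges_ES n (e : rel 'I_n) : symmetric e -> irreflexive e ->
  #|ES e [set: 'I_n]| = 2 * nedges e.
Proof.
move=> hsym hirr; rewrite /nedges.
set L := [set p : 'I_n * 'I_n | (p.1 < p.2) && e p.1 p.2].
rewrite -(cardsID L (ES e setT)).
have -> : ES e setT :&: L = L.
  by apply/setP => -[a b]; rewrite !inE /eS !inE; case: (e a b); rewrite ?andbF ?andbT.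
have -> : ES e setT :\: L = (fun p : 'I_n * 'I_n => (p.2, p.1)) @^-1: L.
  apply/setP => -[a b]; rewrite !inE /eS !inE /= (hsym b a).
  case Hab: (e a b); rewrite ?andbF ?andbT //=.
  have : a != b by apply/eqP => E; move: Hab; rewrite E hirr.
  rewrite -val_eqE /=; case: ltngtP => //.
rewrite card_preimset; first lia.
by move=> [a b] [c d] [-> ->].
Qed.

Lemma i2_diff (a b c d : 'I_2) : a != b -> c != d -> (a == c) = (b == d).
Proof.
by case: a b c d => [[|[|?]] ?] [[|[|?]] ?] [[|[|?]] ?] [[|[|?]] ?].
Qed.

Lemma i2_comp (a b : 'I_2) : a != b -> (a == ord0) = (b != ord0).
Proof. by case: a b => [[|[|?]] ?] [[|[|?]] ?]. Qed.

Definition col0 n (A : {set 'I_n}) : {ffun 'I_n -> 'I_2} :=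
  [ffun i => if i \in A then ord0 else ord_max].

Lemma indepP n (e : rel 'I_n) A x y :
  independent e A -> x \in A -> y \in A -> e x y = false.
Proof. by move=> /forall_inP/(_ x) H Hx Hy; move: (H Hx) => /forall_inP/(_ y Hy)/negbTE. Qed.

Lemma col0_edge n (e : rel 'I_n) A x y :
  independent e A -> independent e (~: A) -> e x y -> col0 A x != col0 A y.
Proof.
move=> hA hB Hxy; rewrite !ffunE.
case Hx: (x \in A); case Hy: (y \in A) => //.
  by rewrite (indepP hA Hx Hy) in Hxy.
by rewrite (indepP hB (x:=x) (y:=y)) ?inE ?Hx ?Hy in Hxy.
Qed.

Lemma coef_spec n (e : rel 'I_n) (A : {set 'I_n}) k :
  connected_graph e -> independent e A -> independent e (~: A) -> #|A| != #|~: A| ->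
  cqf_coef e k [:: #|A|; #|~: A|] = (asc e (col0 A) == k).
Proof.
move=> hconn hA hB hAB.
have col0_prop : proper_col e (col0 A).
  by apply/forallP => x; apply/forallP => y; apply/implyP; apply: col0_edge.
have col0_cnt : [forall j : 'I_2, #|[set i | col0 A i == j]| == nth 0 [:: #|A|; #|~: A|] j].
  apply/forallP => -[[|[|j]] Hj] //=.
    apply/eqP; apply: eq_card => i; rewrite !inE ffunE -val_eqE /=.
    by case: (i \in A).
  apply/eqP; apply: eq_card => i; rewrite !inE ffunE -val_eqE /=.
  by case: (i \in A).
have uniqc : forall c : {ffun 'I_n -> 'I_2}, proper_col e c ->
    [forall j : 'I_2, #|[set i | c i == j]| == nth 0 [:: #|A|; #|~: A|] j] ->
    c = col0 A.
  move=> c Hp Hc.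
  have f_edge : forall x y, e x y -> (c x == col0 A x) = (c y == col0 A y).
    move=> x y Hxy; apply: i2_diff; last exact: (col0_edge hA hB Hxy).
    by move: Hp => /forallP/(_ x)/forallP/(_ y)/implyP; apply.
  have f_conn : forall x y, connect e x y -> (c x == col0 A x) = (c y == col0 A y).
    move=> x y /connectP [p Hq ->]; elim: p x Hq => //= z p IH x /andP[Hxz Hq].
    by rewrite (f_edge _ _ Hxz); apply: IH.
  case: (pickP (fun x => c x == col0 A x)) => [x0 Hx0 | Hno].
    by apply/ffunP => y; apply/eqP; rewrite -(f_conn x0 y (hconn x0 y)).
  move: Hc => /forallP/(_ ord0)/eqP; rewrite /=.
  have -> : #|[set i | c i == ord0]| = #|~: A|.
    apply: eq_card => i; rewrite !inE (i2_comp (negbT (Hno i))) ffunE.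
    by case: (i \in A).
  by move/eqP; rewrite eq_sym (negbTE hAB).
rewrite /cqf_coef; case: eqP => Hk.
  apply/eqP/cards1P; exists (col0 A); apply/setP => c; rewrite !inE.
  apply/idP/eqP => [/and3P[Hp Hc _]| ->]; first exact: uniqc.
  by rewrite col0_prop col0_cnt Hk eqxx.
apply/eqP; rewrite cards_eq0; apply/eqP/setP => c; rewrite !inE.
apply/negbTE; apply/negP => /and3P[Hp Hc /eqP Hk']; apply: Hk.
by rewrite -Hk' (uniqc c Hp Hc).
Qed.

Lemma asc_sum n (e : rel 'I_n) A :
  independent e A -> independent e (~: A) ->
  asc e (col0 A) + asc e (col0 (~: A)) = nedges e.
Proof.
move=> hA hB; rewrite /asc /nedges.
rewrite -(cardsID [set p : 'I_n * 'I_n | col0 A p.1 < col0 A p.2]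
                  [set p : 'I_n * 'I_n | (p.1 < p.2) && e p.1 p.2]).
congr (_ + _); apply: eq_card => -[a b]; rewrite !inE /= !ffunE ?inE.
  by case: (a < b); case: (e a b); rewrite ?andbF.
case: (a < b) => //=; case He: (e a b); rewrite ?andbF //=.
case Ha: (a \in A); case Hb: (b \in A) => //=.
  by rewrite (indepP hA Ha Hb) in He.
by rewrite (indepP hB (x:=a) (y:=b)) ?inE ?Ha ?Hb in He.
Qed.

Theorem corollary5p4 (n : nat) (e : rel 'I_n) :
  symmetric e -> irreflexive e -> is_tree e -> ~~ odd n ->
  (exists A : {set 'I_n},
      [/\ independent e A, independent e (~: A) & #|A| != #|~: A|]) ->
  ~ cqf_palindromic e /\ ~ cqf_symmetric e.
Proof.
move=> hsym hirr [hconn hacy] hev [A [hA hB hAB]].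
have hn0 : 0 < n.
  have := cardsC A; rewrite card_ord; move/eqP: hAB; lia.
have hm : nedges e = n.-1.
  have := nedges_ES hsym hirr.
  rewrite (ES_count hsym hirr hacy) ?cardsT ?card_ord //; first lia.
  move=> x y _ _; rewrite (@eq_connect _ (eS e setT) e) //.
  by move=> a b; rewrite /eS !inE.
have hodd : odd (nedges e).
  by rewrite hm; case: n hn0 hev {hconn hacy hA hB hAB e hsym hirr hm A} => // n' _ /= /negbNE.
have hsum := asc_sum hA hB.
have cA k := @coef_spec n e A k hconn hA hB hAB.
have hB' : independent e (~: ~: A) by rewrite setCK.
have hAB' : #|~: A| != #|~: ~: A| by rewrite setCK eq_sym.
have cB k := @coef_spec n e (~: A) k hconn hB hB' hAB'.

set k0 := asc e (col0 A) in hsum cA.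
set k1 := asc e (col0 (~: A)) in hsum cB.
have Hk : k0 != k1.
  apply/eqP => E; move: hodd; rewrite -hsum -E addnn odd_double //.
split.
  move=> /(_ k0 [:: #|A|; #|~: A|]) H.
  have : k0 <= nedges e by rewrite -hsum leq_addr.
  move/H; rewrite !cA eqxx -hsum addKn.
  by rewrite (negbTE Hk).
move=> /(_ k0 [:: #|A|; #|~: A|] [:: #|~: A|; #|A|]) H.
have : perm_eq [:: #|A|; #|~: A|] [:: #|~: A|; #|A|].
  by rewrite -[[:: #|A|; _]]/([:: #|A|] ++ [:: #|~: A|]) perm_catC.
by move/H; rewrite cA -{2}(setCK A) cB eqxx eq_sym (negbTE Hk).
Qed.
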